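(* Let $d>0$, let $\ell$ be a certified lower bound with certificate matrix $\Lambda$, and suppose $f(d,\ell)=1$. Let $j\in\{1,\dots,m\}$ satisfy $0<a_j^\top y(d,\ell)-u_j\le\gamma_j(d,\ell)$. Define $\ell^{(1)}:=\ell-\frac{2(t_j(d,\ell)-v_j(\ell))}{d_j\gamma_j(d,\ell)^2}e_j$ and suppose $f(d,\ell^{(1)})>0$. Define $d^{(1)}:=d/f(d,\ell^{(1)})$, $\ell^{(2)}:=\ell^{(1)}+\frac{2(2v_j(\ell^{(1)})-\gamma_j(d^{(1)},\ell^{(1)}))}{(m-1)d^{(1)}_j\gamma_j(d^{(1)},\ell^{(1)})^2+2}e_j$, $d^{(2)}:=d^{(1)}+\frac{2}{m-1}\frac{1}{\gamma_j(d^{(1)},\ell^{(1)})^2}e_j$, and $d^{(3)}:=d^{(2)}/f(d^{(2)},\ell^{(2)})$. Then there is a scalar $\alpha(d,\ell)>\frac{m^2-1}{m^2}$ such that $$d^{(3)}=\alpha(d,\ell)\Big(d+\frac{2}{m-1}\frac{1}{\gamma_j(d,\ell)^2}e_j\Big).$$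
   Context: Standing assumption: $A=[a_1|\cdots|a_m]\in\mathbb{R}^{n\times m}$ has columns of unit Euclidean norm and $\{A\lambda:\lambda\ge0\}=\mathbb{R}^n$; $u\in\mathbb{R}^m$. $D=\mathrm{diag}(d)$; $r(\ell)=\tfrac12(u+\ell)$, $v(\ell)=\tfrac12(u-\ell)$, $B(d)=ADA^\top$, $y(d,\ell)=B(d)^{-1}ADr(\ell)$, $t(d,\ell)=A^\top y(d,\ell)-r(\ell)$, $f(d,\ell)=v(\ell)^\top Dv(\ell)-t(d,\ell)^\top Dt(d,\ell)$, $\gamma_i(d,\ell)=\sqrt{f(d,\ell)a_i^\top B(d)^{-1}a_i}$ when $f(d,\ell)>0$. $\ell$ is a certified lower bound with certificate matrix $\Lambda\in\mathbb{R}^{m\times m}$ if $A\Lambda=-A$, $\Lambda\ge0$, $-\Lambda^\top u\ge\ell$. *)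

(* Defs.v *)
From HB Require Import structures.
From mathcomp Require Import all_boot all_order all_algebra.
Set Implicit Arguments. Unset Strict Implicit. Unset Printing Implicit Defensive.
Import Order.TTheory GRing.Theory Num.Theory.
Local Open Scope ring_scope.

Section Defs.
Variables (R : rcfType) (n m : nat) (A : 'M[R]_(n, m)) (u : 'cV[R]_m).

Definition unit_columns : Prop :=
  forall i : 'I_m, \sum_(k < n) (A k i) ^+ 2 = 1.
Definition positively_spanning : Prop :=
  forall x : 'cV[R]_n, exists lam : 'cV[R]_m,
    (forall i, 0 <= lam i 0) /\ A *m lam = x.

Definition Dm (d : 'cV[R]_m) : 'M[R]_m := diag_mx d^T.
Definition rv (l : 'cV[R]_m) : 'cV[R]_m := 2^-1 *: (u + l).
Definition vv (l : 'cV[R]_m) : 'cV[R]_m := 2^-1 *: (u - l).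
Definition Bm (d : 'cV[R]_m) : 'M[R]_n := A *m Dm d *m A^T.
Definition yv (d l : 'cV[R]_m) : 'cV[R]_n :=
  invmx (Bm d) *m (A *m Dm d *m rv l).
Definition tv (d l : 'cV[R]_m) : 'cV[R]_m := A^T *m yv d l - rv l.
Definition fval (d l : 'cV[R]_m) : R :=
  ((vv l)^T *m Dm d *m vv l) 0 0 - ((tv d l)^T *m Dm d *m tv d l) 0 0.
(* gamma_i(d,l) = sqrt(f(d,l) a_i^T B(d)^{-1} a_i); only used where f > 0 *)
Definition gam (d l : 'cV[R]_m) (i : 'I_m) : R :=
  Num.sqrt (fval d l * ((col i A)^T *m invmx (Bm d) *m col i A) 0 0).

Definition certified_lb (l : 'cV[R]_m) (Lam : 'M[R]_m) : Prop :=
  [/\ A *m Lam = - A, (forall i k, 0 <= Lam i k) &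
      (forall i, l i 0 <= (- (Lam^T *m u)) i 0)].
End Defs.

Definition ev {R : rcfType} {m : nat} (j : 'I_m) : 'cV[R]_m := delta_mx j 0.

(* Main.v *)
Require Import Defs.
From HB Require Import structures.
From mathcomp Require Import all_boot all_order all_algebra.
From mathcomp Require Import ring lra.
Import Order.TTheory GRing.Theory Num.Theory.
Local Open Scope ring_scope.
Set Implicit Arguments. Unset Strict Implicit.

Section Aux.
Variables (R : rcfType) (n m : nat) (A : 'M[R]_(n, m)) (u : 'cV[R]_m).

Definition wsum (d x w : 'cV[R]_m) : R := \sum_i d i 0 * (x i 0 * w i 0).
Definition qs (d l x : 'cV[R]_m) : R :=
  \sum_i d i 0 * ((x i 0 - u i 0) * (x i 0 - l i 0)).

Lemma quadD (d x w : 'cV[R]_m) : (x^T *m Dm d *m w) 0 0 = wsum d x w.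
Proof.
rewrite /Dm mul_mx_diag mxE; apply: eq_bigr => i _; rewrite !mxE; ring.
Qed.

Lemma quadB (d : 'cV[R]_m) (z z' : 'cV[R]_n) :
  (z^T *m Bm A d *m z') 0 0 = wsum d (A^T *m z) (A^T *m z').
Proof.
by rewrite -quadD /Bm trmx_mul trmxK !mulmxA.
Qed.

Lemma wsum_ge0 (d x : 'cV[R]_m) : (forall i, 0 < d i 0) -> 0 <= wsum d x x.
Proof.
move=> hd; apply: sumr_ge0 => i _; apply: mulr_ge0; first exact: ltW.
by rewrite -expr2 sqr_ge0.
Qed.

Lemma wsum_eq0 (d x : 'cV[R]_m) : (forall i, 0 < d i 0) -> wsum d x x = 0 -> forall i, x i 0 = 0.
Proof.
move=> hd h i.
have H : forall k, predT k -> 0 <= d k 0 * (x k 0 * x k 0).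
  move=> k _; apply: mulr_ge0; first exact: ltW.
  by rewrite -expr2 sqr_ge0.
have /eqP := psumr_eq0P H h (i:=i) isT.
by rewrite mulf_eq0 (gt_eqF (hd i)) /= -expr2 sqrf_eq0 => /eqP.
Qed.

Lemma Bm_unit (d : 'cV[R]_m) : (forall i, 0 < d i 0) -> positively_spanning A ->
  Bm A d \in unitmx.
Proof.
move=> hd hs; rewrite unitmxE unitfE; apply/negP => /det0P [v vn0 vB].
have h0 : wsum d (A^T *m v^T) (A^T *m v^T) = 0.
  by rewrite -quadB trmxK vB mul0mx mxE.
have hw := wsum_eq0 hd h0.
have vA : v *m A = 0.
  have -> : v *m A = (A^T *m v^T)^T by rewrite trmx_mul !trmxK.
  by apply/matrixP => i k; rewrite mxE [in LHS](ord1 i) hw mxE.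
have [lam [_ hl]] := hs v^T.
have vv0 : v *m v^T = 0 by rewrite -hl mulmxA vA mul0mx.
move/negP: vn0; apply; apply/eqP/matrixP => i k.
have : \sum_k (v 0 k) ^+ 2 = 0.
  have -> : \sum_k (v 0 k) ^+ 2 = (v *m v^T) 0 0.
    by rewrite mxE; apply: eq_bigr => q _; rewrite !mxE expr2.
  by rewrite vv0 mxE.
move/psumr_eq0P => /(_ (fun q _ => sqr_ge0 _) k isT)/eqP.
by rewrite sqrf_eq0 (ord1 i) mxE => /eqP.
Qed.

Lemma qs_expand (d l x x0 : 'cV[R]_m) :
  wsum d (x - x0) (x0 - rv u l) = 0 ->
  qs d l x = wsum d (x - x0) (x - x0) -
    (wsum d (vv u l) (vv u l) - wsum d (x0 - rv u l) (x0 - rv u l)).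
Proof.
move=> h.
transitivity (\sum_i (d i 0 * ((x - x0) i 0 * (x - x0) i 0) -
   (d i 0 * (vv u l i 0 * vv u l i 0) -
    d i 0 * ((x0 - rv u l) i 0 * (x0 - rv u l) i 0)) +
   2 * (d i 0 * ((x - x0) i 0 * (x0 - rv u l) i 0)))).
  by apply: eq_bigr => i _; rewrite !mxE; field.
by rewrite big_split /= -mulr_sumr -/(wsum _ _ _) h mulr0 addr0 !sumrB.
Qed.

Lemma orth (d l : 'cV[R]_m) (z : 'cV[R]_n) : Bm A d \in unitmx ->
  wsum d (A^T *m z) (tv A u d l) = 0.
Proof.
move=> hB; rewrite -quadD trmx_mul trmxK -!mulmxA.
have -> : A *m (Dm d *m tv A u d l) = 0.
  rewrite /tv /yv !mulmxBr !mulmxA.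
  have -> : A *m Dm d *m A^T = Bm A d by [].
  by rewrite mulmxV // mul1mx subrr.
by rewrite mulmx0 mxE.
Qed.

Lemma qid (d l : 'cV[R]_m) (y : 'cV[R]_n) : Bm A d \in unitmx ->
  qs d l (A^T *m y) = wsum d (A^T *m (y - yv A u d l)) (A^T *m (y - yv A u d l))
                      - fval A u d l.
Proof.
move=> hB; rewrite mulmxBr (qs_expand (x0 := A^T *m yv A u d l)).
  by rewrite /fval !quadD.
by rewrite -mulmxBr; exact: orth.
Qed.

Lemma wsum0 (d : 'cV[R]_m) : wsum d (A^T *m 0) (A^T *m 0) = 0.
Proof. by rewrite mulmx0 /wsum big1 // => i _; rewrite mxE mul0r mulr0. Qed.

Lemma uniq_f (d l : 'cV[R]_m) (ys : 'cV[R]_n) (F : R) :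
  (forall i, 0 < d i 0) -> Bm A d \in unitmx ->
  (forall y, qs d l (A^T *m y) = wsum d (A^T *m (y - ys)) (A^T *m (y - ys)) - F) ->
  fval A u d l = F /\ A^T *m yv A u d l = A^T *m ys.
Proof.
move=> hd hB h.
have e1 := h ys; rewrite qid // subrr wsum0 in e1.
have e2 := h (yv A u d l); rewrite qid // subrr wsum0 in e2.
have h1 := wsum_ge0 (A^T *m (ys - yv A u d l)) hd.
have h2 := wsum_ge0 (A^T *m (yv A u d l - ys)) hd.
have W0 : wsum d (A^T *m (ys - yv A u d l)) (A^T *m (ys - yv A u d l)) = 0 by lra.
split; first by lra.
have hw := wsum_eq0 hd W0.
apply/matrixP => i k; rewrite (ord1 k); have := hw i; rewrite mulmxBr.
set X := A^T *m yv A u d l; set Y := A^T *m ys.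
by rewrite !mxE => /eqP; rewrite subr_eq0 eq_sym => /eqP.
Qed.
End Aux.

Section Aux2.
Variables (R : rcfType) (n m : nat) (A : 'M[R]_(n, m)) (u : 'cV[R]_m) (j : 'I_m).

Definition beta (d : 'cV[R]_m) : R :=
  ((col j A)^T *m invmx (Bm A d) *m col j A) 0 0.
Definition bvec (d : 'cV[R]_m) : 'cV[R]_n := invmx (Bm A d) *m col j A.

Lemma colT (w : 'cV[R]_n) : (A^T *m w) j 0 = ((col j A)^T *m w) 0 0.
Proof. by rewrite !mxE; apply: eq_bigr => k _; rewrite !mxE. Qed.

Lemma F1 (d : 'cV[R]_m) (z : 'cV[R]_n) : Bm A d \in unitmx ->
  wsum d (A^T *m z) (A^T *m bvec d) = (A^T *m z) j 0.
Proof.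
move=> hB; rewrite -quadB /bvec -mulmxA mulKVmx //.
by rewrite !mxE; apply: eq_bigr => k _; rewrite !mxE mulrC.
Qed.

Lemma gj (d : 'cV[R]_m) : (A^T *m bvec d) j 0 = beta d.
Proof. by rewrite colT /bvec mulmxA. Qed.

Lemma beta_wsum (d : 'cV[R]_m) : Bm A d \in unitmx ->
  beta d = wsum d (A^T *m bvec d) (A^T *m bvec d).
Proof. by move=> hB; rewrite F1 // gj. Qed.

Lemma beta_pos (d : 'cV[R]_m) : unit_columns A -> (forall i, 0 < d i 0) ->
  Bm A d \in unitmx -> 0 < beta d.
Proof.
move=> hA hd hB; rewrite lt0r beta_wsum // wsum_ge0 // andbT.
apply/negP => /eqP h0; have hw := wsum_eq0 hd h0.
have := F1 (col j A) hB; rewrite /wsum big1; last first.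
  by move=> i _; rewrite hw !mulr0.
have -> : (A^T *m col j A) j 0 = 1.
  rewrite -(hA j) mxE; apply: eq_bigr => k _; rewrite !mxE expr2 //.
by move/eqP; rewrite eq_sym oner_eq0.
Qed.

Lemma DmZ (c : R) (d : 'cV[R]_m) : Dm (c *: d) = c *: Dm d.
Proof. by apply/matrixP => i k; rewrite !mxE mulrnAr. Qed.

Lemma BmZ (c : R) (d : 'cV[R]_m) : Bm A (c *: d) = c *: Bm A d.
Proof. by rewrite /Bm DmZ -scalemxAr -scalemxAl. Qed.

Lemma beta_scale (c : R) (d : 'cV[R]_m) : Bm A (c *: d) \in unitmx ->
  beta (c *: d) = c^-1 * beta d.
Proof.
move=> hB; rewrite /beta; move: (hB); rewrite BmZ => hB'.
by rewrite invmxZ // -scalemxAr -scalemxAl mxE.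
Qed.

Lemma qsZ (c : R) (d l x : 'cV[R]_m) : qs u (c *: d) l x = c * qs u d l x.
Proof. by rewrite /qs mulr_sumr; apply: eq_bigr => i _; rewrite mxE -mulrA. Qed.

Lemma wsumZ (c : R) (d x w : 'cV[R]_m) : wsum (c *: d) x w = c * wsum d x w.
Proof. by rewrite /wsum mulr_sumr; apply: eq_bigr => i _; rewrite mxE -mulrA. Qed.

Lemma fval_scale (c : R) (d l : 'cV[R]_m) : 0 < c -> (forall i, 0 < d i 0) ->
  positively_spanning A ->
  fval A u (c *: d) l = c * fval A u d l /\
  A^T *m yv A u (c *: d) l = A^T *m yv A u d l.
Proof.
move=> hc hd hs.
have hd' : forall i, 0 < (c *: d) i 0 by move=> i; rewrite mxE mulr_gt0.
apply: uniq_f => //; first exact: Bm_unit.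
move=> y; rewrite qsZ qid; last exact: Bm_unit.
by rewrite wsumZ mulrBr.
Qed.

Lemma sum_diff1 (F G : 'I_m -> R) : (forall i, i != j -> F i = G i) ->
  \sum_i F i = \sum_i G i + (F j - G j).
Proof.
move=> h; rewrite (bigD1 j) //= [in RHS](bigD1 j) //=.
rewrite (eq_bigr G); last by move=> i /h.
ring.
Qed.

Lemma evE (i : 'I_m) : (ev j : 'cV[R]_m) i 0 = (i == j)%:R.
Proof. by rewrite /ev mxE andbT. Qed.

Lemma qs_ev (d l x : 'cV[R]_m) (e dl : R) :
  qs u (d + e *: ev j) (l + dl *: ev j) x =
  qs u d l x + e * ((x j 0 - u j 0) * (x j 0 - l j 0 - dl))
  - d j 0 * dl * (x j 0 - u j 0).
Proof.
rewrite /qs (sum_diff1 (G := fun i => d i 0 * ((x i 0 - u i 0) * (x i 0 - l i 0)))).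
  by rewrite !mxE !eqxx /=; ring.
by move=> i hij; rewrite !mxE (negbTE hij) /= !mulr0 !addr0.
Qed.

Lemma wsum_ev (d x : 'cV[R]_m) (e : R) :
  wsum (d + e *: ev j) x x = wsum d x x + e * (x j 0 * x j 0).
Proof.
rewrite /wsum (sum_diff1 (G := fun i => d i 0 * (x i 0 * x i 0))).
  by rewrite !mxE !eqxx /=; ring.
by move=> i hij; rewrite !mxE (negbTE hij) /= !mulr0 !addr0.
Qed.

Lemma wsum_expand (d x g : 'cV[R]_m) (k : R) :
  wsum d (x - k *: g) (x - k *: g) =
  wsum d x x - 2 * k * wsum d x g + k ^+ 2 * wsum d g g.
Proof.
transitivity (\sum_i (d i 0 * (x i 0 * x i 0) - 2 * k * (d i 0 * (x i 0 * g i 0))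
   + k ^+ 2 * (d i 0 * (g i 0 * g i 0)))).
  by apply: eq_bigr => i _; rewrite !mxE; ring.
by rewrite big_split sumrB /= /wsum -!mulr_sumr.
Qed.
End Aux2.



Section Steps.
Variables (R : rcfType) (n m : nat) (A : 'M[R]_(n, m)) (u : 'cV[R]_m) (j : 'I_m).
Hypothesis hA1 : unit_columns A.
Hypothesis hs : positively_spanning A.

Lemma entryB (X Y : 'cV[R]_m) i : (X - Y) i 0 = X i 0 - Y i 0.
Proof. by rewrite !mxE. Qed.

Lemma entryD (X Y : 'cV[R]_m) i : (X + Y) i 0 = X i 0 + Y i 0.
Proof. by rewrite !mxE. Qed.

Lemma entryZ (c : R) (X : 'cV[R]_m) i : (c *: X) i 0 = c * X i 0.
Proof. by rewrite !mxE. Qed.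

Lemma qs_evl (d l x : 'cV[R]_m) (dl : R) :
  qs u d (l + dl *: ev j) x = qs u d l x - d j 0 * dl * (x j 0 - u j 0).
Proof. by have := qs_ev u j d l x 0 dl; rewrite scale0r addr0 mul0r addr0. Qed.

Lemma step1 (d l : 'cV[R]_m) (sg dl : R) : (forall i, 0 < d i 0) ->
  fval A u d l = 1 ->
  sg = (A^T *m yv A u d l) j 0 - u j 0 ->
  dl = - (2 * sg / (d j 0 * beta A j d)) ->
  fval A u d (l + dl *: ev j) = 1 - sg ^+ 2 / beta A j d /\
  (A^T *m yv A u d (l + dl *: ev j)) j 0 = u j 0.
Proof.
move=> hd hf hsg hdl.
have hB := Bm_unit hd hs.
have hb := beta_pos j hA1 hd hB.
set y0 := yv A u d l; set b := bvec A j d; set k := - (sg / beta A j d).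
have [h1 h2] : fval A u d (l + dl *: ev j) = 1 - sg ^+ 2 / beta A j d /\
   A^T *m yv A u d (l + dl *: ev j) = A^T *m (y0 + k *: b).
- apply: (uniq_f hd hB) => y; rewrite qs_evl qid // hf -/y0.
  have -> : y - (y0 + k *: b) = (y - y0) - k *: b by rewrite opprD addrA.
  rewrite [A^T *m (_ - k *: b)]mulmxBr -scalemxAr wsum_expand F1 //.
  rewrite -beta_wsum // mulmxBr entryB hsg hdl.
  have hdj := hd j.
  rewrite /k hsg; field.
  by rewrite (gt_eqF hb) (gt_eqF hdj).
- split => //.
  rewrite h2 mulmxDr -scalemxAr entryD entryZ gj /k hsg.
  by field; rewrite (gt_eqF hb).
Qed.

Lemma step3 (d l : 'cV[R]_m) (g M : R) : (forall i, 0 < d i 0) ->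
  fval A u d l = 1 -> (A^T *m yv A u d l) j 0 = u j 0 ->
  g ^+ 2 = beta A j d -> 0 < g -> 0 < M ->
  fval A u (d + (2 / M * (g ^+ 2)^-1) *: ev j)
    (l + (2 * (2 * vv u l j 0 - g) / (M * d j 0 * g ^+ 2 + 2)) *: ev j)
  = 1 + (M * (M + 2))^-1.
Proof.
move=> hd hf hc hg g0 M0.
have hB := Bm_unit hd hs.
set e := 2 / M * (g ^+ 2)^-1.
set dl := 2 * (2 * vv u l j 0 - g) / (M * d j 0 * g ^+ 2 + 2).
have e0 : 0 < e by rewrite /e mulr_gt0 // ?invr_gt0 ?exprn_gt0 // divr_gt0.
have hd2 : forall i, 0 < (d + e *: ev j) i 0.
  move=> i; rewrite entryD entryZ evE; case: (i == j) => /=.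
    by rewrite mulr1 addr_gt0.
  by rewrite mulr0 addr0.
set y0 := yv A u d l; set b := bvec A j d; set k := - (g^-1 / (M + 2)).
have [h1 _] : fval A u (d + e *: ev j) (l + dl *: ev j) = 1 + (M * (M + 2))^-1 /\
   A^T *m yv A u (d + e *: ev j) (l + dl *: ev j) = A^T *m (y0 + k *: b).
  apply: (uniq_f hd2 (Bm_unit hd2 hs)) => y; rewrite qs_ev qid // hf -/y0.
  have -> : y - (y0 + k *: b) = (y - y0) - k *: b by rewrite opprD addrA.
  rewrite wsum_ev [A^T *m (_ - k *: b)]mulmxBr -scalemxAr wsum_expand F1 //.
  rewrite -beta_wsum // entryB entryZ gj mulmxBr entryB hc.
  rewrite -hg /dl /e /k /vv entryZ entryB.
  have hdj := hd j.
  field.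
  have p1 : 0 < M + 2 by rewrite addr_gt0.
  have p2 : 0 < M * d j 0 * g ^+ 2 + 2.
    by rewrite addr_gt0 // !mulr_gt0 // exprn_gt0.
  by rewrite (gt_eqF p1) (gt_eqF M0) (gt_eqF g0) (gt_eqF p2).
by [].
Qed.
End Steps.

Unset Implicit Arguments. Set Strict Implicit.

Lemma ATa (R : rcfType) (n m : nat) (A : 'M[R]_(n, m)) (j : 'I_m) :
  unit_columns A -> (A^T *m col j A) j 0 = 1.
Proof.
by move=> hA; rewrite -(hA j) mxE; apply: eq_bigr => k _; rewrite !mxE expr2.
Qed.

Lemma m_ge2 (R : rcfType) (n m : nat) (A : 'M[R]_(n, m)) (j : 'I_m) :
  unit_columns A -> positively_spanning A -> (1 < m)%N.
Proof.
move=> hA hs; rewrite ltnNge; apply/negP => hm.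
have allj : forall i : 'I_m, i = j.
  move=> i; apply: val_inj => /=.
  have := leq_trans (ltn_ord i) hm; have := leq_trans (ltn_ord j) hm.
  by rewrite !ltnS !leqn0 => /eqP -> /eqP ->.
have [lam [hl0 hl]] := hs (- col j A).
have hAl : A *m lam = lam j 0 *: col j A.
  apply/matrixP => k z; rewrite (ord1 z) !mxE (bigD1 j) //= big1 ?addr0.
    by rewrite mulrC.
  by move=> i /eqP; rewrite (allj i).
have := congr1 (fun M => (A^T *m M) j 0) hl => /=.
rewrite hAl -scalemxAr mulmxN !mxE.
set s := (\sum_k _); have -> : s = 1 by rewrite /s -(@ATa _ _ _ A j hA) mxE.
move=> h; have := hl0 j; rewrite mulr1 in h; rewrite h; lra.
Qed.

Theorem theorem7 (R : rcfType) (n m : nat) (A : 'M[R]_(n, m)) (u : 'cV[R]_m)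
    (hA1 : unit_columns A) (hA2 : positively_spanning A)
    (d l : 'cV[R]_m) (Lam : 'M[R]_m)
    (hd : forall i, 0 < d i 0)
    (hl : certified_lb A u l Lam)
    (hf : fval A u d l = 1)
    (j : 'I_m)
    (hj : 0 < (A^T *m yv A u d l) j 0 - u j 0 /\
          (A^T *m yv A u d l) j 0 - u j 0 <= gam A u d l j) :
  let l1 := l - (2 * (tv A u d l j 0 - vv u l j 0)
                   / (d j 0 * gam A u d l j ^+ 2)) *: ev j in
  0 < fval A u d l1 ->
  let d1 := (fval A u d l1)^-1 *: d in
  let g1 := gam A u d1 l1 j in
  let l2 := l1 + (2 * (2 * vv u l1 j 0 - g1)
                   / ((m - 1)%:R * d1 j 0 * g1 ^+ 2 + 2)) *: ev j in
  let d2 := d1 + (2 / (m - 1)%:R * (g1 ^+ 2)^-1) *: ev j in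
  let d3 := (fval A u d2 l2)^-1 *: d2 in
  exists alpha : R,
    (m%:R ^+ 2 - 1) / m%:R ^+ 2 < alpha /\
    d3 = alpha *: (d + (2 / (m - 1)%:R * (gam A u d l j ^+ 2)^-1) *: ev j).
Proof.
move=> l1 hf1 d1 g1 l2 d2 d3.
have hm := @m_ge2 _ _ _ A j hA1 hA2.
set M := (m - 1)%:R.
have M0 : 0 < M by rewrite /M ltr0n subn_gt0.
have hmM : m%:R = M + 1 :> R by rewrite /M natrB ?subrK // ltnW.
have hB := Bm_unit hd hA2.
have hb := beta_pos j hA1 hd hB.
set b := beta A j d in hb.
have hgam : gam A u d l j ^+ 2 = b by rewrite /gam hf mul1r sqr_sqrtr // ltW.
set sg := (A^T *m yv A u d l) j 0 - u j 0 in hj.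
have hl1 : l1 = l + (- (2 * sg / (d j 0 * b))) *: ev j.
  rewrite /l1 hgam scaleNr; congr (_ - (_ * _ / _) *: _).
  have eN : (- l) j 0 = - l j 0 by rewrite mxE.
  by rewrite /sg /tv /vv /rv !entryB !entryZ !entryD eN; field.
have [hf1e hc1] := step1 hA1 hA2 hd hf (erefl sg) (erefl _).
rewrite -hl1 -/b in hf1e hc1.
set f1 := fval A u d l1 in hf1 hf1e.
have hf1lt : f1 < 1.
  have : 0 < sg ^+ 2 / b by rewrite divr_gt0 // exprn_gt0 // hj.1.
  rewrite hf1e; lra.
have hi : 0 < f1^-1 by rewrite invr_gt0.
have [hfd1 hcd1] := fval_scale u l1 hi hd hA2.
rewrite -/f1 mulVf ?(gt_eqF hf1) // in hfd1.
have hd1 : forall i, 0 < d1 i 0.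
  by move=> i; rewrite /d1 entryZ mulr_gt0 // invr_gt0.
have hB1 := Bm_unit hd1 hA2.
have hb1 : beta A j d1 = f1 * b by rewrite /d1 beta_scale // invrK.
have hbd1 := beta_pos j hA1 hd1 hB1.
have hg1sq : g1 ^+ 2 = beta A j d1.
  by rewrite /g1 /gam -/d1 hfd1 mul1r sqr_sqrtr // ltW.
have g1pos : 0 < g1 by rewrite /g1 /gam -/d1 hfd1 mul1r sqrtr_gt0.
have hc : (A^T *m yv A u d1 l1) j 0 = u j 0 by rewrite /d1 hcd1.
have h3 := step3 hA2 hd1 hfd1 hc hg1sq g1pos M0.
exists ((1 + (M * (M + 2))^-1) * f1)^-1; split.
  rewrite hmM.
  have p1 : 0 < M + 2 by rewrite addr_gt0.
  have -> : ((1 + (M * (M + 2))^-1) * f1)^-1 =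
            ((M + 1) ^+ 2 - 1) / (M + 1) ^+ 2 / f1.
    have q1 : 0 < M + 1 by rewrite addr_gt0.
    have p2 : 0 < M * (M + 2) + 1 by rewrite addr_gt0 // mulr_gt0.
    field; rewrite -/M.
    by rewrite (gt_eqF hf1) (gt_eqF q1) (gt_eqF M0) (gt_eqF p1) (gt_eqF p2).
  set X := ((M + 1) ^+ 2 - 1) / (M + 1) ^+ 2.
  have X0 : 0 < X.
    rewrite /X; have -> : (M + 1) ^+ 2 - 1 = M * (M + 2) by ring.
    have q1 : 0 < M + 1 by rewrite addr_gt0.
    by rewrite divr_gt0 ?mulr_gt0 ?exprn_gt0.
  rewrite -subr_gt0.
  have -> : X / f1 - X = X * (1 - f1) / f1.
    by field; rewrite (gt_eqF hf1).
  by rewrite divr_gt0 // mulr_gt0 // subr_gt0.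
rewrite /d3 h3 /d2 /d1 hg1sq hb1 hgam.
apply/matrixP => i k; rewrite (ord1 k) !entryZ !entryD !entryZ -/f1 -/M.
have p1 : 0 < M + 2 by rewrite addr_gt0.
have p2 : 0 < M * (M + 2) + 1 by rewrite addr_gt0 // mulr_gt0.
field.
by rewrite (gt_eqF hf1) (gt_eqF hb) (gt_eqF M0) (gt_eqF p1) (gt_eqF p2).
Qed.
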